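(* Let $H$ be a Hopf algebra with $S^2=\mathrm{id}$ and let $\tau$ be a Hopf automorphism of $H$ of finite order. Then $\exp_{\tau^{-1}}(H)=\exp_\tau(H)$ (in particular one exists if and only if the other does).
   Context: For a Hopf automorphism $\tau$ of $H$ of finite order and $n$ a multiple of that order, $h^{[n,\tau]}=\sum h_1(\tau\cdot h_2)(\tau^2\cdot h_3)\cdots(\tau^{n-1}\cdot h_n)$ (Sweedler notation). $\exp_\tau(H)$ is the smallest positive integer $n$, if it exists, that is a multiple of the order of $\tau$ and satisfies $h^{[n,\tau]}=\varepsilon(h)1$ for all $h\in H$. *)

(* Defs.v *)
(* Hopf algebras over a field k, encoded with explicit
   Sweedler representations of the coproduct; equalities in H (x) H and
   H (x) H (x) H are tested through the universal property of the tensor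
   product (all bilinear / trilinear maps into arbitrary k-modules). *)
From HB Require Import structures.
From mathcomp Require Import all_boot all_order all_algebra.
Set Implicit Arguments. Unset Strict Implicit. Unset Printing Implicit Defensive.
Import Order.TTheory GRing.Theory Num.Theory.
Local Open Scope ring_scope.

Section Hopf.
Variables (k : fieldType) (H : algType k).

(* An element of H (x) H is represented by a finite list of pairs
   [(a_i, b_i)] standing for sum_i a_i (x) b_i. *)
Definition bilin (M : lmodType k) (f : H -> H -> M) : Prop :=
  (forall (a : k) x y z, f (a *: x + y) z = a *: f x z + f y z) /\
  (forall (a : k) x y z, f z (a *: x + y) = a *: f z x + f z y).

Definition trilin (M : lmodType k) (g : H -> H -> H -> M) : Prop :=
  (forall (a : k) x y u v, g (a *: x + y) u v = a *: g x u v + g y u v) /\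
  (forall (a : k) x y u v, g u (a *: x + y) v = a *: g u x v + g u y v) /\
  (forall (a : k) x y u v, g u v (a *: x + y) = a *: g u v x + g u v y).

Definition teq2 (s t : seq (H * H)) : Prop :=
  forall (M : lmodType k) (f : H -> H -> M), bilin f ->
    \sum_(p <- s) f p.1 p.2 = \sum_(p <- t) f p.1 p.2.

Definition coassoc (D : H -> seq (H * H)) : Prop :=
  forall h (M : lmodType k) (g : H -> H -> H -> M), trilin g ->
    \sum_(p <- D h) \sum_(q <- D p.1) g q.1 q.2 p.2
    = \sum_(p <- D h) \sum_(q <- D p.2) g p.1 q.1 q.2.

Record is_hopf (D : H -> seq (H * H)) (eps : H -> k) (S : H -> H) : Prop := {
  D_linear : forall (a : k) x y,
     teq2 (D (a *: x + y)) ([seq (a *: p.1, p.2) | p <- D x] ++ D y);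
  D_coassoc : coassoc D;
  eps_linear : forall (a : k) x y, eps (a *: x + y) = a * eps x + eps y;
  eps_counit_l : forall h, \sum_(p <- D h) eps p.1 *: p.2 = h;
  eps_counit_r : forall h, \sum_(p <- D h) eps p.2 *: p.1 = h;
  D_mul : forall x y,
     teq2 (D (x * y)) [seq (p.1 * q.1, p.2 * q.2) | p <- D x, q <- D y];
  D_one : teq2 (D 1) [:: (1, 1)];
  eps_mul : forall x y, eps (x * y) = eps x * eps y;
  eps_one : eps 1 = 1;
  S_linear : forall (a : k) x y, S (a *: x + y) = a *: S x + S y;
  S_antipode_l : forall h, \sum_(p <- D h) S p.1 * p.2 = eps h *: 1;
  S_antipode_r : forall h, \sum_(p <- D h) p.1 * S p.2 = eps h *: 1
}.

(* tau is a Hopf algebra automorphism (bijective bialgebra endomorphism;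
   compatibility with S is then automatic). *)
Record is_hopf_aut (D : H -> seq (H * H)) (eps : H -> k) (tau : H -> H) : Prop := {
  tau_linear : forall (a : k) x y, tau (a *: x + y) = a *: tau x + tau y;
  tau_mul : forall x y, tau (x * y) = tau x * tau y;
  tau_one : tau 1 = 1;
  tau_bij : bijective tau;
  tau_D : forall h, teq2 (D (tau h)) [seq (tau p.1, tau p.2) | p <- D h];
  tau_eps : forall h, eps (tau h) = eps h
}.

Definition is_order (tau : H -> H) (m : nat) : Prop :=
  (0 < m)%N /\ (forall h, iter m tau h = h) /\
  (forall j, (0 < j < m)%N -> exists h, iter j tau h <> h).

(* Sweedler representation of the n-fold coproduct Delta^(n-1) h
   = sum h_1 (x) ... (x) h_n, as lists of length n, defined by
   Delta^(n) = (id (x) Delta^(n-1)) o Delta. *)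
Fixpoint sweedler (D : H -> seq (H * H)) (n : nat) (h : H) : seq (seq H) :=
  match n with
  | 0 => [:: [::]]
  | 1 => [:: [:: h]]
  | n'.+1 => flatten [seq [seq p.1 :: t | t <- sweedler D n' p.2] | p <- D h]
  end.

Definition twisted_power (D : H -> seq (H * H)) (tau : H -> H) (n : nat) (h : H) : H :=
  \sum_(t <- sweedler D n h) \prod_(i < n) iter i tau (nth 0 t i).

Definition exp_cond (D : H -> seq (H * H)) (eps : H -> k) (tau : H -> H) (n : nat) : Prop :=
  (0 < n)%N /\ (exists m, is_order tau m /\ (m %| n)%N) /\
  (forall h, twisted_power D tau n h = eps h *: 1).

Definition is_exp (D : H -> seq (H * H)) (eps : H -> k) (tau : H -> H) (n : nat) : Prop :=
  exp_cond D eps tau n /\ (forall m, (0 < m < n)%N -> ~ exp_cond D eps tau m).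

End Hopf.

(* Main.v *)
Require Import Defs.
From HB Require Import structures.
From mathcomp Require Import all_boot all_order all_algebra.
From Stdlib Require Import FunctionalExtensionality.
Set Implicit Arguments. Unset Strict Implicit. Unset Printing Implicit Defensive.
Import GRing.Theory.
Local Open Scope ring_scope.

Section Lin.
Variable k : fieldType.

Definition lin (M N : lmodType k) (phi : M -> N) :=
  forall (a : k) x y, phi (a *: x + y) = a *: phi x + phi y.

Variables (M N P : lmodType k).

Lemma lin0 (phi : M -> N) : lin phi -> phi 0 = 0.
Proof.
move=> hp; have E := hp 1 0 0.
rewrite scaler0 addr0 scale1r in E.
rewrite -{1}[phi 0]addr0 in E.
by move/addrI: E.
Qed.

Lemma linZ (phi : M -> N) a x : lin phi -> phi (a *: x) = a *: phi x.
Proof. by move=> hp; rewrite -[a *: x]addr0 hp lin0 // addr0. Qed.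

Lemma linD (phi : M -> N) x y : lin phi -> phi (x + y) = phi x + phi y.
Proof. by move=> hp; rewrite -[x]scale1r hp !scale1r. Qed.

Lemma lin_sum (phi : M -> N) (I : Type) (s : seq I) (F : I -> M) :
  lin phi -> phi (\sum_(i <- s) F i) = \sum_(i <- s) phi (F i).
Proof.
move=> hp; elim: s => [|i s IH]; first by rewrite !big_nil lin0.
by rewrite !big_cons linD // IH.
Qed.

Lemma lin_sumf (I : Type) (s : seq I) (F : I -> M -> N) :
  (forall i, lin (F i)) -> lin (fun x => \sum_(i <- s) F i x).
Proof.
move=> hF a x y; rewrite scaler_sumr -big_split /=.
by apply: eq_bigr => i _; rewrite hF.
Qed.

Lemma lin_comp (f : N -> P) (g : M -> N) : lin f -> lin g -> lin (fun x => f (g x)).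
Proof. by move=> hf hg a x y; rewrite hg hf. Qed.

Lemma lin_id : lin (fun x : M => x).
Proof. by []. Qed.

End Lin.

Section Alg.
Variables (k : fieldType) (H : algType k).

Lemma lin_mull (c : H) : lin (fun x : H => x * c).
Proof. by move=> a x y; rewrite mulrDl scalerAl. Qed.

Lemma lin_mulr (c : H) : lin (fun x : H => c * x).
Proof. by move=> a x y; rewrite mulrDr scalerAr. Qed.

End Alg.

Section Hopf1.
Variables (k : fieldType) (H : algType k) (D : H -> seq (H * H)) (eps : H -> k) (S : H -> H).
Hypothesis hH : is_hopf D eps S.

Lemma teqP s t : teq2 s t -> forall (M : lmodType k) (f : H -> H -> M), bilin f ->
  \sum_(p <- s) f p.1 p.2 = \sum_(p <- t) f p.1 p.2.
Proof. by move=> e M f hf; apply: e. Qed.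

Lemma coassocP (M : lmodType k) (g : H -> H -> H -> M) h :
  (forall v w, lin (fun x => g x v w)) -> (forall u w, lin (fun x => g u x w)) ->
  (forall u v, lin (g u v)) ->
  \sum_(p <- D h) \sum_(q <- D p.1) g q.1 q.2 p.2
    = \sum_(p <- D h) \sum_(q <- D p.2) g p.1 q.1 q.2.
Proof.
move=> h1 h2 h3; apply: (D_coassoc hH); split; last split.
- by move=> a x y u v; apply: h1.
- by move=> a x y u v; apply: h2.
- by move=> a x y u v; apply: h3.
Qed.

Definition Df (M : lmodType k) (f : H -> H -> M) v := \sum_(p <- D v) f p.1 p.2.

Lemma bilin0l (M : lmodType k) (f : H -> H -> M) z : bilin f -> f 0 z = 0.
Proof.
move=> hf; have E := hf.1 1 0 0 z.
rewrite scaler0 addr0 scale1r -{1}[f 0 z]addr0 in E.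
by move/addrI: E.
Qed.

Lemma bilin0r (M : lmodType k) (f : H -> H -> M) z : bilin f -> f z 0 = 0.
Proof.
move=> hf; have E := hf.2 1 0 0 z.
rewrite scaler0 addr0 scale1r -{1}[f z 0]addr0 in E.
by move/addrI: E.
Qed.

Lemma bilinZl (M : lmodType k) (f : H -> H -> M) a x z : bilin f -> f (a *: x) z = a *: f x z.
Proof. by move=> hf; rewrite -[a *: x]addr0 hf.1 bilin0l // addr0. Qed.

Lemma bilinZr (M : lmodType k) (f : H -> H -> M) a x z : bilin f -> f z (a *: x) = a *: f z x.
Proof. by move=> hf; rewrite -[a *: x]addr0 hf.2 bilin0r // addr0. Qed.

Lemma Df_lin (M : lmodType k) (f : H -> H -> M) : bilin f -> lin (Df f).
Proof.
move=> hf a x y; rewrite /Df (D_linear hH a x y hf) big_cat big_map /=.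
congr (_ + _); rewrite scaler_sumr; apply: eq_bigr => p _.
by rewrite bilinZl.
Qed.

Lemma lin_S : lin S.
Proof. exact: (S_linear hH). Qed.

Lemma eps0 : eps 0 = 0.
Proof.
have E := eps_linear hH 1 0 0.
rewrite scaler0 addr0 mul1r in E.
rewrite -{1}[eps 0]addr0 in E.
by move/addrI: E.
Qed.

Lemma epsZ a x : eps (a *: x) = a * eps x.
Proof. by rewrite -[a *: x]addr0 (eps_linear hH) eps0 addr0. Qed.

Lemma epsD x y : eps (x + y) = eps x + eps y.
Proof. by rewrite -[x]scale1r (eps_linear hH) !scale1r mul1r. Qed.

Lemma eps_sum (I : Type) (s : seq I) (F : I -> H) :
  eps (\sum_(i <- s) F i) = \sum_(i <- s) eps (F i).
Proof.
elim: s => [|i s IH]; first by rewrite !big_nil eps0.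
by rewrite !big_cons epsD IH.
Qed.

Lemma counitL (M : lmodType k) (phi : H -> M) h : lin phi ->
  \sum_(p <- D h) eps p.1 *: phi p.2 = phi h.
Proof.
move=> hp; rewrite -{2}(eps_counit_l hH h) lin_sum //.
by apply: eq_bigr => p _; rewrite linZ.
Qed.

Lemma counitR (M : lmodType k) (phi : H -> M) h : lin phi ->
  \sum_(p <- D h) eps p.2 *: phi p.1 = phi h.
Proof.
move=> hp; rewrite -{2}(eps_counit_r hH h) lin_sum //.
by apply: eq_bigr => p _; rewrite linZ.
Qed.

Lemma S1 : S 1 = 1.
Proof.
have E := S_antipode_l hH 1.
rewrite (eps_one hH) scale1r in E.
have hb : bilin (fun a b : H => S a * b).
  split=> z a x y /=; first by rewrite (S_linear hH) mulrDl scalerAl.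
  by rewrite mulrDr scalerAr.
by rewrite (teqP (D_one hH) hb) big_seq1 mulr1 in E.
Qed.

Lemma S_sum (I : Type) (s : seq I) (F : I -> H) :
  S (\sum_(i <- s) F i) = \sum_(i <- s) S (F i).
Proof. exact: (lin_sum _ _ lin_S). Qed.

Lemma SZ a x : S (a *: x) = a *: S x.
Proof. exact: (linZ _ _ lin_S). Qed.

Lemma epsS h : eps (S h) = eps h.
Proof.
have E := S_antipode_l hH h.
have E2 : eps (\sum_(p <- D h) S p.1 * p.2) = eps h.
  by rewrite E epsZ (eps_one hH) mulr1.
rewrite -E2 eps_sum -{1}(eps_counit_r hH h) S_sum.
rewrite eps_sum; apply: eq_bigr => p _.
by rewrite (eps_mul hH) SZ epsZ mulrC.
Qed.


Definition conv (f g : H -> H) h := \sum_(p <- D h) f p.1 * g p.2.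
Definition u h := eps h *: (1 : H).

Lemma lin_u : lin u.
Proof. by move=> a x y; rewrite /u (eps_linear hH) scalerDl scalerA. Qed.

Lemma conv_lin f g : lin f -> lin g -> lin (conv f g).
Proof.
move=> hf hg; apply: (@Df_lin H (fun a b : H => f a * g b)); split=> a x y z /=.
  by rewrite hf mulrDl scalerAl.
by rewrite hg mulrDr scalerAr.
Qed.

Lemma conv_ur f h : lin f -> conv f u h = f h.
Proof.
move=> hf; rewrite /conv /u -(counitR h hf); apply: eq_bigr => p _.
by rewrite -scalerAr mulr1.
Qed.

Lemma conv_ul f h : lin f -> conv u f h = f h.
Proof.
move=> hf; rewrite /conv /u -(counitL h hf); apply: eq_bigr => p _.
by rewrite -scalerAl mul1r.
Qed.

Lemma conv_assoc f g l h : lin f -> lin g -> lin l ->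
  conv (conv f g) l h = conv f (conv g l) h.
Proof.
move=> hf hg hl; rewrite /conv.
transitivity (\sum_(p <- D h) \sum_(q <- D p.1) f q.1 * g q.2 * l p.2).
  by apply: eq_bigr => p _; rewrite mulr_suml.
rewrite (@coassocP H (fun a b c : H => f a * g b * l c) h).
- by apply: eq_bigr => p _; rewrite mulr_sumr; apply: eq_bigr => q _; rewrite mulrA.
- by move=> v w a x y /=; rewrite hf !mulrDl !scalerAl.
- by move=> v w a x y /=; rewrite hg mulrDr mulrDl scalerAl scalerAr.
- by move=> v w a x y /=; rewrite hl mulrDr scalerAr.
Qed.

Lemma conv_ext f f' g g' h : f =1 f' -> g =1 g' -> conv f g h = conv f' g' h.
Proof. by move=> ef eg; apply: eq_bigr => p _; rewrite ef eg. Qed.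

(* bilinear convolution, for anti-multiplicativity of S *)
Definition conv2 (A B : H -> H -> H) x y :=
  \sum_(p <- D x) \sum_(q <- D y) A p.1 q.1 * B p.2 q.2.
Definition u2 x y := (eps x * eps y) *: (1 : H).

Lemma conv2_ur A x y : bilin A -> conv2 A u2 x y = A x y.
Proof.
move=> hA; rewrite /conv2 /u2.
have l1 : lin (fun a => A a y) by move=> a v w; rewrite hA.1.
rewrite -(counitR x l1) /=; apply: eq_bigr => p _.
have l2 : lin (fun b => A p.1 b) by move=> a v w; rewrite hA.2.
rewrite -(counitR y l2) scaler_sumr /=; apply: eq_bigr => q _.
by rewrite -scalerAr mulr1 scalerA mulrC.
Qed.

Lemma conv2_ul B x y : bilin B -> conv2 u2 B x y = B x y.
Proof.
move=> hB; rewrite /conv2 /u2.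
have l1 : lin (fun a => B a y) by move=> a v w; rewrite hB.1.
rewrite -(counitL x l1) /=; apply: eq_bigr => p _.
have l2 : lin (fun b => B p.2 b) by move=> a v w; rewrite hB.2.
rewrite -(counitL y l2) scaler_sumr /=; apply: eq_bigr => q _.
by rewrite -scalerAl mul1r scalerA mulrC.
Qed.

Lemma conv2_ext A A' B B' x y : (forall a b, A a b = A' a b) -> (forall a b, B a b = B' a b) ->
  conv2 A B x y = conv2 A' B' x y.
Proof.
by move=> eA eB; apply: eq_bigr => p _; apply: eq_bigr => q _; rewrite eA eB.
Qed.

Lemma conv2_assoc A B C x y : bilin A -> bilin B -> bilin C ->
  conv2 (conv2 A B) C x y = conv2 A (conv2 B C) x y.
Proof.
move=> hA hB hC; rewrite /conv2.
pose Phi a b c := \sum_(q <- D y) \sum_(q' <- D q.1) A a q'.1 * B b q'.2 * C c q.2.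
transitivity (\sum_(p <- D x) \sum_(p' <- D p.1) Phi p'.1 p'.2 p.2).
  apply: eq_bigr => p _.
  under eq_bigr => q _ do rewrite mulr_suml.
  rewrite exchange_big; apply: eq_bigr => p' _; apply: eq_bigr => q _.
  by rewrite mulr_suml.
rewrite (@coassocP H Phi x).
- apply: eq_bigr => p _.
  under [RHS]eq_bigr => q _ do rewrite mulr_sumr.
  rewrite [RHS]exchange_big; apply: eq_bigr => p' _.
  rewrite /Phi (@coassocP H (fun u v w => A p.1 u * B p'.1 v * C p'.2 w) y).
  + apply: eq_bigr => q _; rewrite mulr_sumr; apply: eq_bigr => q' _.
    by rewrite mulrA.
  + by move=> v w s a1 a2 /=; rewrite hA.2 !mulrDl !scalerAl.
  + by move=> v w s a1 a2 /=; rewrite hB.2 mulrDr mulrDl scalerAl scalerAr.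
  + by move=> v w s a1 a2 /=; rewrite hC.2 mulrDr scalerAr.
- move=> b c s a1 a2 /=; rewrite scaler_sumr -big_split; apply: eq_bigr => q _.
  rewrite scaler_sumr -big_split; apply: eq_bigr => q' _ /=.
  by rewrite hA.1 !mulrDl !scalerAl.
- move=> b c s a1 a2 /=; rewrite scaler_sumr -big_split; apply: eq_bigr => q _.
  rewrite scaler_sumr -big_split; apply: eq_bigr => q' _ /=.
  by rewrite hB.1 mulrDr mulrDl scalerAl scalerAr.
- move=> b c s a1 a2 /=; rewrite scaler_sumr -big_split; apply: eq_bigr => q _.
  rewrite scaler_sumr -big_split; apply: eq_bigr => q' _ /=.
  by rewrite hC.1 mulrDr scalerAr.
Qed.

Lemma S_mul x y : S (x * y) = S y * S x.
Proof.
pose A a b := S (a * b); pose Mu (a b : H) := a * b; pose B a b := S b * S a.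
have hA : bilin A.
  split=> s a1 a2 z; rewrite /A.
    by rewrite mulrDl -scalerAl (S_linear hH).
  by rewrite mulrDr -scalerAr (S_linear hH).
have hM : bilin Mu.
  by split=> s a1 a2 z; rewrite /Mu ?mulrDl ?mulrDr -?scalerAl -?scalerAr.
have hB : bilin B.
  split=> s a1 a2 z; rewrite /B (S_linear hH).
    by rewrite mulrDr scalerAr.
  by rewrite mulrDl scalerAl.
have e1 : forall a b, conv2 A Mu a b = u2 a b.
  move=> a b; rewrite /conv2 /u2 /A /Mu.
  have hf : bilin (fun c d : H => S c * d).
    split=> s a1 a2 z; first by rewrite (S_linear hH) mulrDl scalerAl.
    by rewrite mulrDr scalerAr.
  have := teqP (D_mul hH a b) hf.
  rewrite big_allpairs_dep /= (S_antipode_l hH) (eps_mul hH) => <-.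
  by [].
have e2 : forall a b, conv2 Mu B a b = u2 a b.
  move=> a b; rewrite /conv2 /u2 /B /Mu.
  transitivity (\sum_(p <- D a) p.1 * (eps b *: 1) * S p.2).
    apply: eq_bigr => p _; rewrite -(S_antipode_r hH b) mulr_sumr mulr_suml.
    by apply: eq_bigr => q _; rewrite !mulrA.
  under eq_bigr => p _ do rewrite -scalerAr mulr1 -scalerAl.
  by rewrite -scaler_sumr (S_antipode_r hH) scalerA mulrC.
rewrite -[S (x * y)]/(A x y) -(conv2_ur x y hA).
rewrite (conv2_ext x y (fun a b => erefl (A a b)) (fun a b => esym (e2 a b))).
rewrite -conv2_assoc //.
rewrite (conv2_ext x y e1 (fun a b => erefl (B a b))).
by rewrite conv2_ul.
Qed.

Lemma Df_linE (M : lmodType k) (g : H -> H -> M) s x y : bilin g ->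
  \sum_(p <- D (s *: x + y)) g p.1 p.2 =
  s *: \sum_(p <- D x) g p.1 p.2 + \sum_(p <- D y) g p.1 p.2.
Proof. by move=> hg; have := @Df_lin M g hg s x y. Qed.

Section SD.
Variables (M : lmodType k) (f : H -> H -> M).
Hypothesis hf : bilin f.

Ltac leaf := rewrite ?(S_linear hH) ?mulrDl ?mulrDr ?mulrDl ?mulrDr -?scalerAl -?scalerAr -?scalerAl -?scalerAr -?scalerAl ?hf.1 ?hf.2.
Ltac sumlin := repeat (rewrite scaler_sumr -big_split; apply: eq_bigr => ? _ /=).

Definition K x y z := \sum_(a <- D x) \sum_(b <- D y) \sum_(c <- D z)
  f (a.1 * b.1 * S c.2) (a.2 * b.2 * S c.1).

Lemma bilK3 (a1 a2 b1 b2 : H) : bilin (fun c1 c2 => f (a1 * b1 * S c2) (a2 * b2 * S c1)).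
Proof. by split=> s x y z /=; leaf. Qed.

Lemma bilK2 (a1 a2 : H) z : bilin (fun b1 b2 => \sum_(c <- D z) f (a1 * b1 * S c.2) (a2 * b2 * S c.1)).
Proof. by split=> s x y w /=; sumlin; leaf. Qed.

Lemma bilK1 y z : bilin (fun a1 a2 => \sum_(b <- D y) \sum_(c <- D z) f (a1 * b.1 * S c.2) (a2 * b.2 * S c.1)).
Proof. by split=> s x x' w /=; sumlin; leaf. Qed.

Lemma K_lin1 y z : lin (fun x => K x y z).
Proof. by move=> s x x' /=; exact: (Df_linE s x x' (bilK1 y z)). Qed.

Lemma K_lin2 x z : lin (fun y => K x y z).
Proof.
move=> s y y' /=; rewrite /K scaler_sumr -big_split; apply: eq_bigr => a _ /=.
exact: (Df_linE s y y' (bilK2 a.1 a.2 z)).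
Qed.

Lemma K_lin3 x y : lin (K x y).
Proof.
move=> s z z' /=; rewrite /K scaler_sumr -big_split; apply: eq_bigr => a _ /=.
rewrite scaler_sumr -big_split; apply: eq_bigr => b _ /=.
exact: (Df_linE s z z' (bilK3 a.1 a.2 b.1 b.2)).
Qed.

Definition R z := \sum_(c <- D z) f (S c.2) (S c.1).

Lemma R_lin : lin R.
Proof.
have hR : bilin (fun c1 c2 => f (S c2) (S c1)).
  by split=> a x y w /=; rewrite (S_linear hH) ?hf.1 ?hf.2.
by move=> s z z' /=; exact: (Df_linE s z z' hR).
Qed.

Lemma Ef_lin : lin (fun x => \sum_(p <- D (S x)) f p.1 p.2).
Proof.
by move=> s x x' /=; rewrite (S_linear hH); exact: (Df_linE _ _ _ hf).
Qed.

Lemma K_ii x v : \sum_(q <- D v) K x q.1 q.2 = eps v *: \sum_(a <- D x) f a.1 a.2.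
Proof.
rewrite /K exchange_big scaler_sumr; apply: eq_bigr => a _ /=.
pose F b1 b2 c1 c2 := f (a.1 * b1 * S c2) (a.2 * b2 * S c1).
pose g x1 x2 x3 := \sum_(b <- D x1) F b.1 b.2 x2 x3.
have hg1 : forall u1 u2, lin (fun x1 => g x1 u1 u2).
  move=> u1 u2 s y y' /=; rewrite /g /F.
  have hb : bilin (fun b1 b2 => f (a.1 * b1 * S u2) (a.2 * b2 * S u1)).
    by split=> s' x1 x2 w /=; leaf.
  exact: (Df_linE s y y' hb).
have hg2 : forall u1 u2, lin (fun x2 => g u1 x2 u2).
  by move=> u1 u2 s y y' /=; rewrite /g /F; sumlin; leaf.
have hg3 : forall u1 u2, lin (fun x3 => g u1 u2 x3).
  by move=> u1 u2 s y y' /=; rewrite /g /F; sumlin; leaf.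
transitivity (\sum_(q <- D v) \sum_(c <- D q.2) g q.1 c.1 c.2).
  by apply: eq_bigr => q _; rewrite /g /F exchange_big.
rewrite -(@coassocP M g v hg1 hg2 hg3) /g.
transitivity (\sum_(q <- D v) \sum_(c <- D q.1) \sum_(b <- D c.2) F c.1 b.1 b.2 q.2).
  apply: eq_bigr => q _; apply: (@coassocP M (fun x1 x2 x3 => F x1 x2 x3 q.2) q.1).
  - by move=> u1 u2 s y y' /=; rewrite /F; leaf.
  - by move=> u1 u2 s y y' /=; rewrite /F; leaf.
  - by move=> u1 u2 s y y' /=; rewrite /F; leaf.
transitivity (\sum_(q <- D v) \sum_(c <- D q.1) eps c.2 *: f (a.1 * c.1 * S q.2) a.2).
  apply: eq_bigr => q _; apply: eq_bigr => c _.
  rewrite /F.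
  have hl : lin (fun w => f (a.1 * c.1 * S q.2) (a.2 * w)) by move=> s y y' /=; leaf.
  rewrite (eq_bigr (fun b => f (a.1 * c.1 * S q.2) (a.2 * (b.1 * S b.2)))); last first.
    by move=> b _; rewrite mulrA.
  rewrite -(lin_sum (D c.2) (fun b => b.1 * S b.2) hl) /= (S_antipode_r hH) -scalerAr mulr1.
  by rewrite bilinZr.
transitivity (\sum_(q <- D v) f (a.1 * q.1 * S q.2) a.2).
  apply: eq_bigr => q _.
  have hl : lin (fun w => f (a.1 * w * S q.2) a.2) by move=> s y y' /=; leaf.
  exact: (counitR q.1 hl).
have hl : lin (fun w => f w a.2) by move=> s y y' /=; leaf.
rewrite -(lin_sum (D v) (fun q => a.1 * q.1 * S q.2) hl) /=.
rewrite (eq_bigr (fun q => a.1 * (q.1 * S q.2))); last by move=> q _; rewrite mulrA.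
by rewrite -mulr_sumr (S_antipode_r hH) -scalerAr mulr1 bilinZl.
Qed.


Lemma K_iii w z : \sum_(q <- D w) K (S q.1) q.2 z = eps w *: R z.
Proof.
pose f' x y := \sum_(c <- D z) f (x * S c.2) (y * S c.1).
have hf' : bilin f' by split=> s x y t /=; rewrite /f'; sumlin; leaf.
have E : forall q : H * H, K (S q.1) q.2 z = \sum_(r <- D (S q.1 * q.2)) f' r.1 r.2.
  move=> q; rewrite (teqP (D_mul hH (S q.1) q.2) hf') big_allpairs_dep /=.
  apply: eq_bigr => a _; apply: eq_bigr => b _; rewrite /f'.
  by apply: eq_bigr => c _.
rewrite (eq_bigr _ (fun q _ => E q)).
have hl := Df_lin hf'.
rewrite -(lin_sum (D w) (fun q => S q.1 * q.2) hl) /= (S_antipode_l hH).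
rewrite (linZ _ _ hl) /Df (teqP (D_one hH) hf') big_seq1 /f' /R /=.
by congr (_ *: _); apply: eq_bigr => c _; rewrite !mul1r.
Qed.

Lemma S_D h : \sum_(p <- D (S h)) f p.1 p.2 = \sum_(p <- D h) f (S p.2) (S p.1).
Proof.
rewrite -(counitR h Ef_lin) /=.
transitivity (\sum_(p <- D h) \sum_(q <- D p.2) K (S p.1) q.1 q.2).
  by apply: eq_bigr => p _; rewrite K_ii.
rewrite -(@coassocP M (fun a b c => K (S a) b c) h).
- transitivity (\sum_(p <- D h) eps p.1 *: R p.2).
    by apply: eq_bigr => p _; rewrite K_iii.
  exact: (counitL h R_lin).
- by move=> v w' s y y' /=; rewrite (S_linear hH) (K_lin1 v w').
- by move=> v w' s y y' /=; rewrite (K_lin2 (S v) w').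
- by move=> v w' s y y' /=; rewrite (K_lin3 (S v) w').
Qed.
End SD.

Fixpoint alllin (fs : seq (H -> H)) : Prop :=
  if fs is f :: fs' then lin f /\ alllin fs' else True.

Definition Gl (fs : seq (H -> H)) : H -> H := foldr (fun f acc => conv f acc) u fs.

Lemma Gl_lin fs : alllin fs -> lin (Gl fs).
Proof.
elim: fs => [|f fs IH] /=; first by move=> _; exact: lin_u.
by case=> hf hfs; apply: conv_lin => //; apply: IH.
Qed.

Lemma alllin_cat l1 l2 : alllin l1 -> alllin l2 -> alllin (l1 ++ l2).
Proof. by elim: l1 => [|f l1 IH] //= [hf h1] h2; split => //; apply: IH. Qed.

Lemma alllin_rev l : alllin l -> alllin (rev l).
Proof.
elim: l => [|f l IH] //= [hf hl].
by rewrite rev_cons -cats1; apply: alllin_cat => //; apply: IH.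
Qed.

Lemma alllin_map (F : (H -> H) -> (H -> H)) l :
  (forall f, lin f -> lin (F f)) -> alllin l -> alllin (map F l).
Proof. by move=> hF; elim: l => [|f l IH] //= [hf hl]; split; [apply: hF | apply: IH]. Qed.

Lemma alllin_mapn (F : nat -> (H -> H)) s :
  (forall i, lin (F i)) -> alllin (map F s).
Proof. by move=> hF; elim: s => [|i s IH] //=. Qed.

Lemma Gl_cat l1 l2 h : alllin l1 -> alllin l2 ->
  Gl (l1 ++ l2) h = conv (Gl l1) (Gl l2) h.
Proof.
elim: l1 h => [|f l1 IH] h /=.
  by move=> _ h2; rewrite conv_ul //; apply: Gl_lin.
case=> hf h1 h2.
rewrite (conv_ext h (fun x => erefl (f x)) (fun x => IH x h1 h2)).
by rewrite -conv_assoc //; apply: Gl_lin.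
Qed.

Lemma Gl_rcons l g h : alllin l -> lin g -> Gl (rcons l g) h = conv (Gl l) g h.
Proof.
move=> hl hg; rewrite -cats1 Gl_cat //.
by apply: conv_ext => // x /=; rewrite conv_ur.
Qed.

Definition psi (f : H -> H) := fun x => S (f (S x)).

Lemma lin_psi f : lin f -> lin (psi f).
Proof. by move=> hf a x y; rewrite /psi (S_linear hH) hf (S_linear hH). Qed.

Lemma conv_S f g h : lin f -> lin g ->
  S (conv f g (S h)) = conv (psi g) (psi f) h.
Proof.
move=> hf hg; rewrite /conv S_sum.
under eq_bigr => p _ do rewrite S_mul.
have hb : bilin (fun a b => S (g b) * S (f a)).
  split=> s x y z /=.
    by rewrite hf (S_linear hH) mulrDr scalerAr.
  by rewrite hg (S_linear hH) mulrDl scalerAl.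
exact: (S_D hb h).
Qed.

Lemma Gl_S fs h : alllin fs -> S (Gl fs (S h)) = Gl (rev (map psi fs)) h.
Proof.
elim: fs h => [|f fs IH] h /=.
  by move=> _; rewrite /u SZ epsS S1.
case=> hf hfs.
rewrite conv_S //; last exact: Gl_lin.
rewrite rev_cons Gl_rcons; last exact: lin_psi.
- by apply: conv_ext => // x; rewrite /psi IH.
- by apply: alllin_rev; apply: alllin_map => //; exact: lin_psi.
Qed.

Lemma sweedlerS n h : sweedler D n.+2 h =
  flatten [seq [seq p.1 :: t | t <- sweedler D n.+1 p.2] | p <- D h].
Proof. by []. Qed.

Lemma tp_Gl n fs h : size fs = n.+1 -> alllin fs ->
  \sum_(t <- sweedler D n.+1 h) \prod_(i < n.+1) nth id fs i (nth 0 t i) = Gl fs h.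
Proof.
elim: n fs h => [|n IH] [|f fs] // h.
  case: fs => // _ [hf _] /=.
  by rewrite big_seq1 big_ord1 /= conv_ur.
move=> [sz] [hf hfs].
rewrite sweedlerS big_flatten big_map /conv; apply: eq_bigr => p _.
rewrite big_map.
under eq_bigr => t _ do rewrite big_ord_recl /=.
rewrite -mulr_sumr; congr (_ * _).
rewrite -[RHS]/(Gl fs p.2) -IH //.
Qed.

Lemma iter_lin (f : H -> H) i : lin f -> lin (iter i f).
Proof.
move=> hf; elim: i => [|i IH] a x y //=.
by rewrite IH hf.
Qed.

Lemma iter_can (f g : H -> H) i : cancel f g -> cancel (iter i f) (iter i g).
Proof.
move=> c; elim: i => [|i IH] x //.
by rewrite iterSr iterS c IH.
Qed.

Lemma tp_mk (sg : H -> H) n h : lin sg ->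
  twisted_power D sg n.+1 h = Gl (mkseq (fun i => iter i sg) n.+1) h.
Proof.
move=> hs; rewrite /twisted_power -(tp_Gl h (size_mkseq _ _)).
  by apply: eq_bigr => t _; apply: eq_bigr => i _; rewrite nth_mkseq.
by rewrite /mkseq; apply: alllin_mapn => i; apply: iter_lin.
Qed.

Section Tau.
Variables (tau tauinv : H -> H).
Hypothesis ht : is_hopf_aut D eps tau.
Hypothesis hl : cancel tau tauinv.
Hypothesis hr : cancel tauinv tau.
Hypothesis hS2 : forall h, S (S h) = h.

Lemma tau_lin : lin tau.
Proof. exact: (tau_linear ht). Qed.

Lemma tau_sum (I : Type) (s : seq I) (F : I -> H) :
  tau (\sum_(i <- s) F i) = \sum_(i <- s) tau (F i).
Proof. exact: (lin_sum _ _ tau_lin). Qed.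

Lemma tauZ a x : tau (a *: x) = a *: tau x.
Proof. exact: (linZ _ _ tau_lin). Qed.

Lemma tauinv_lin : lin tauinv.
Proof.
move=> a x y; apply: (can_inj hl).
by rewrite (tau_linear ht) !hr.
Qed.

Lemma tauS h : tau (S h) = S (tau h).
Proof.
pose A x := tau (S x); pose B x := S (tau x).
have lA : lin A by move=> a x y; rewrite /A (S_linear hH) (tau_linear ht).
have lB : lin B by move=> a x y; rewrite /B (tau_linear ht) (S_linear hH).
have e1 : forall x, conv A tau x = u x.
  move=> x; rewrite /conv /A.
  under eq_bigr => p _ do rewrite -(tau_mul ht).
  by rewrite -tau_sum (S_antipode_l hH) tauZ (tau_one ht).
have e2 : forall x, conv tau B x = u x.
  move=> x.
  have hb : bilin (fun a b : H => a * S b).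
    split=> s y z w /=; first by rewrite mulrDl scalerAl.
    by rewrite (S_linear hH) mulrDr scalerAr.
  have := teqP (tau_D ht x) hb.
  by rewrite big_map /= (S_antipode_r hH) (tau_eps ht) => E; rewrite /conv /B -E.
rewrite -[tau (S h)]/(A h) -(conv_ur h lA).
rewrite (conv_ext h (fun x => erefl (A x)) (fun x => esym (e2 x))).
rewrite -conv_assoc //; last exact: tau_lin.
rewrite (conv_ext h e1 (fun x => erefl (B x))).
by rewrite conv_ul.
Qed.

Lemma Gl_tau fs h : tau (Gl fs h) = Gl (map (fun f x => tau (f x)) fs) h.
Proof.
elim: fs h => [|f fs IH] h /=.
  by rewrite /u tauZ (tau_one ht).
rewrite /conv tau_sum; apply: eq_bigr => p _.
by rewrite (tau_mul ht) IH.
Qed.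

Lemma iter_tauS i x : iter i tau (S x) = S (iter i tau x).
Proof. by elim: i => [|i IH] //=; rewrite IH tauS. Qed.

Lemma main_dir n : (0 < n)%N -> (forall h, iter n tau h = h) ->
  (forall h, twisted_power D tau n h = eps h *: 1) ->
  forall h, twisted_power D tauinv n h = eps h *: 1.
Proof.
case: n => [//|n] _ hn hp h.
have alF : alllin (mkseq (fun i => iter i tau) n.+1).
  by rewrite /mkseq; apply: alllin_mapn => i; apply: iter_lin; exact: tau_lin.
have hG : forall x, Gl (mkseq (fun i => iter i tau) n.+1) x = u x.
  by move=> x; rewrite -tp_mk ?hp //; exact: tau_lin.
have hA : forall x, Gl (rev (mkseq (fun i => iter i tau) n.+1)) x = u x.
  move=> x.
  have -> : mkseq (fun i => iter i tau) n.+1 = map psi (mkseq (fun i => iter i tau) n.+1).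
    rewrite /mkseq -map_comp; apply: eq_map => i /=.
    by apply: functional_extensionality => y; rewrite /psi iter_tauS hS2.
  rewrite -Gl_S; last first.
    by rewrite /mkseq; apply: alllin_mapn => i; apply: iter_lin; exact: tau_lin.
  by rewrite -/(mkseq _ _) hG /u SZ epsS S1.
have hB : forall x, Gl (map (fun f y => tau (f y)) (rev (mkseq (fun i => iter i tau) n.+1))) x = u x.
  by move=> x; rewrite -Gl_tau hA /u tauZ (tau_one ht).
have hC : map (fun f y => tau (f y)) (rev (mkseq (fun i => iter i tau) n.+1))
          = mkseq (fun i => iter i tauinv) n.+1.
  apply: (@eq_from_nth _ id).
    by rewrite size_map size_rev !size_mkseq.
  rewrite size_map size_rev size_mkseq => i hi.
  rewrite (nth_map id); last by rewrite size_rev size_mkseq.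
  rewrite nth_rev ?size_mkseq // !nth_mkseq //; last first.
    by rewrite subSS ltnS leq_subr.
  apply: functional_extensionality => y.
  rewrite -iterS subnSK //.
  rewrite -{1}[y](iter_can i hr) -iterD subnK ?hn //.
  exact: ltnW.
by rewrite tp_mk -?hC ?hB //; exact: tauinv_lin.
Qed.

Lemma aut_inv : is_hopf_aut D eps tauinv.
Proof.
split.
- exact: tauinv_lin.
- by move=> x y; apply: (can_inj hl); rewrite (tau_mul ht) !hr.
- by apply: (can_inj hl); rewrite hr (tau_one ht).
- by exists tau.
- move=> h M f hf.
  pose f' a b := f (tauinv a) (tauinv b).
  have hf' : bilin f'.
    split=> s x y z; rewrite /f' tauinv_lin.
      by rewrite hf.1.
    by rewrite hf.2.
  have E := teqP (tau_D ht (tauinv h)) hf'.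
  rewrite hr big_map /= in E.
  rewrite big_map /=.
  transitivity (\sum_(p <- D (tauinv h)) f' (tau p.1) (tau p.2)).
    by apply: eq_bigr => p _; rewrite /f' !hl.
  by rewrite -E.
- by move=> h; rewrite -{2}[h]hr (tau_eps ht).
Qed.

Lemma order_inv m : is_order tau m -> is_order tauinv m.
Proof.
case=> m0 [hm hj]; split => //; split.
  by move=> h; apply: (can_inj (iter_can m hl)); rewrite (iter_can m hr) hm.
move=> j hj0; case: (hj j hj0) => h hh.
exists (iter j tau h); rewrite (iter_can j hl).
by move=> e; apply: hh; rewrite -e.
Qed.

Lemma iter_mul m q : (forall h, iter m tau h = h) -> forall h, iter (q * m) tau h = h.
Proof.
move=> hm; elim: q => [|q IH] h //.
by rewrite mulSn iterD IH hm.
Qed.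

Lemma cond_inv n : exp_cond D eps tau n -> exp_cond D eps tauinv n.
Proof.
case=> n0 [[m [om dvd]] hp]; split => //; split.
  by exists m; split => //; apply: order_inv.
apply: main_dir => //.
case/dvdnP: dvd => q ->; apply: iter_mul.
by case: om => _ [].
Qed.

End Tau.
End Hopf1.

Theorem corollary3p5 (k : fieldType) (H : algType k)
    (D : H -> seq (H * H)) (eps : H -> k) (S : H -> H)
    (hH : is_hopf D eps S) (hS2 : forall h, S (S h) = h)
    (tau tauinv : H -> H) (htau : is_hopf_aut D eps tau)
    (hl : cancel tau tauinv) (hr : cancel tauinv tau)
    (hfin : exists m, is_order tau m) :
  forall n : nat, is_exp D eps tauinv n <-> is_exp D eps tau n.
Proof.
have hinv := aut_inv htau hl hr.
have c1 : forall n, exp_cond D eps tau n -> exp_cond D eps tauinv n.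
  by move=> n; apply: (cond_inv hH htau hl hr hS2).
have c2 : forall n, exp_cond D eps tauinv n -> exp_cond D eps tau n.
  by move=> n; apply: (cond_inv hH hinv hr hl hS2).
move=> n; split; case=> c hmin; split.
- exact: c2.
- by move=> m hm cm; apply: (hmin m hm); apply: c1.
- exact: c1.
- by move=> m hm cm; apply: (hmin m hm); apply: c2.
Qed.
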